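(* There is a first order formula $\theta(u,v)$ of the vocabulary $\{+,\cdot,+',\cdot'\}$ such that $P(+,\cdot,\{+',\cdot'\})\cup P(+',\cdot',\{+,\cdot\})\vdash \mathrm{ISOM}(+,\cdot,+',\cdot')$, where $\mathrm{ISOM}(+,\cdot,+',\cdot')$ is the first order sentence expressing that the relation defined by $\theta(u,v)$ is (the graph of) an isomorphism from the structure given by $+,\cdot$ onto the structure given by $+',\cdot'$ (i.e. it is a bijective function $\pi$ of the domain with $\pi(x+y)=\pi(x)+'\pi(y)$ and $\pi(x\cdot y)=\pi(x)\cdot'\pi(y)$ for all $x,y$).
   Context: $+,\cdot,+',\cdot'$ are binary function symbols. $P(+,\cdot)$ denotes the first order Peano axioms in the vocabulary $\{+,\cdot\}$, with Induction Schema $\forall x_1\ldots x_n((\phi(0,\bar x)\wedge\forall y(\phi(y,\bar x)\to\phi(y+1,\bar x)))\to\forall y\phi(y,\bar x))$, where $0$ and $1$ are defined terms denoting the identity elements of $+$ and $\cdot$. For a vocabulary $L$, $P(+,\cdot,L)$ denotes the extension of $P(+,\cdot)$ in which the Induction Schema is taken for all first order formulas of the vocabulary $\{+,\cdot\}\cup L$; $P(+',\cdot',L)$ is defined analogously for $\{+',\cdot'\}$. $\vdash$ is first order provability. *)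

(* Defs.v *)
From Stdlib Require Import List.
Import ListNotations.

Inductive fsym : Type := Add | Mul | Add' | Mul'.

Inductive term : Type :=
| var : nat -> term
| fn : fsym -> term -> term -> term.

(* de Bruijn formulas: [All phi] binds variable 0 of [phi]. *)
Inductive form : Type :=
| Eq : term -> term -> form
| Bot : form
| Imp : form -> form -> form
| All : form -> form.

Definition Neg (p : form) : form := Imp p Bot.
Definition And (p q : form) : form := Neg (Imp p (Neg q)).
Definition Ex (p : form) : form := Neg (All (Neg p)).
Fixpoint AllN (n : nat) (p : form) : form :=
  match n with 0 => p | S k => All (AllN k p) end.

Definition scons (t : term) (s : nat -> term) (n : nat) : term :=
  match n with 0 => t | S k => s k end.

Fixpoint subst_term (s : nat -> term) (t : term) : term :=
  match t with
  | var n => s n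
  | fn f t1 t2 => fn f (subst_term s t1) (subst_term s t2)
  end.

Definition shift : nat -> term := fun n => var (S n).

Definition up (s : nat -> term) : nat -> term :=
  scons (var 0) (fun n => subst_term shift (s n)).

Fixpoint subst_form (s : nat -> term) (p : form) : form :=
  match p with
  | Eq t1 t2 => Eq (subst_term s t1) (subst_term s t2)
  | Bot => Bot
  | Imp p q => Imp (subst_form s p) (subst_form s q)
  | All p => All (subst_form (up s) p)
  end.

Definition inst (t : term) (p : form) : form := subst_form (scons t var) p.

Fixpoint bounded_term (n : nat) (t : term) : Prop :=
  match t with
  | var k => k < n
  | fn _ t1 t2 => bounded_term n t1 /\ bounded_term n t2
  end.

Fixpoint bounded_form (n : nat) (p : form) : Prop :=
  match p with
  | Eq t1 t2 => bounded_term n t1 /\ bounded_term n t2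
  | Bot => True
  | Imp p q => bounded_form n p /\ bounded_form n q
  | All p => bounded_form (S n) p
  end.

Inductive nd : list form -> form -> Prop :=
| ndCtx A p : In p A -> nd A p
| ndII A p q : nd (p :: A) q -> nd A (Imp p q)
| ndIE A p q : nd A (Imp p q) -> nd A p -> nd A q
| ndAllI A p : nd (map (subst_form shift) A) p -> nd A (All p)
| ndAllE A p t : nd A (All p) -> nd A (inst t p)
| ndExp A p : nd A Bot -> nd A p
| ndPeirce A p q : nd A (Imp (Imp (Imp p q) p) p)
| ndRefl A t : nd A (Eq t t)
| ndLeib A s t p : nd A (Eq s t) -> nd A (inst s p) -> nd A (inst t p).

Definition provable (T : form -> Prop) (p : form) : Prop :=
  exists A : list form, (forall q, In q A -> T q) /\ nd A p.

(** * Peano axioms for a pair of symbols (a, m), with 0 and 1 defined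
    as the (two-sided) identity elements of a and m respectively. *)

Section Peano.
Variables a m : fsym.

Definition IsZero (z : term) : form :=
  All (And (Eq (fn a (var 0) (subst_term shift z)) (var 0))
           (Eq (fn a (subst_term shift z) (var 0)) (var 0))).
Definition IsOne (e : term) : form :=
  All (And (Eq (fn m (var 0) (subst_term shift e)) (var 0))
           (Eq (fn m (subst_term shift e) (var 0)) (var 0))).

(* [With01 body]: for all z, e, if z = 0 and e = 1 then body,
   where inside body var 1 denotes 0 and var 0 denotes 1. *)
Definition With01 (body : form) : form :=
  All (All (Imp (IsZero (var 1)) (Imp (IsOne (var 0)) body))).

Definition PA_zero : form := Ex (IsZero (var 0)).
Definition PA_one : form := Ex (IsOne (var 0)).
(* forall x, x + 1 <> 0      (x = var 0, 1 = var 1, 0 = var 2) *)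
Definition PA_succ_nz : form :=
  With01 (All (Neg (Eq (fn a (var 0) (var 1)) (var 2)))).
(* forall x y, x + 1 = y + 1 -> x = y   (x = 1, y = 0, 1 = var 2) *)
Definition PA_succ_inj : form :=
  With01 (All (All (Imp (Eq (fn a (var 1) (var 2)) (fn a (var 0) (var 2)))
                        (Eq (var 1) (var 0))))).
(* forall x y, x + (y + 1) = (x + y) + 1 *)
Definition PA_add_succ : form :=
  With01 (All (All (Eq (fn a (var 1) (fn a (var 0) (var 2)))
                       (fn a (fn a (var 1) (var 0)) (var 2))))).
(* forall x, x . 0 = 0     (x = var 0, 0 = var 2) *)
Definition PA_mul_zero : form :=
  With01 (All (Eq (fn m (var 0) (var 2)) (var 2))).
(* forall x y, x . (y + 1) = x . y + x *)
Definition PA_mul_succ : form :=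
  With01 (All (All (Eq (fn m (var 1) (fn a (var 0) (var 2)))
                       (fn a (fn m (var 1) (var 0)) (var 1))))).

(* Induction instance for a formula phi(y, x_1, ...) with y = var 0 and
   parameters var (i+1), closed off by n universal quantifiers:
   forall x1..xn ((phi(0,x) /\ forall y (phi(y,x) -> phi(y+1,x)))
                  -> forall y phi(y,x)). *)
Definition ind_at0 : nat -> term := scons (var 1) (fun k => var (k + 2)).
Definition ind_y : nat -> term := scons (var 0) (fun k => var (k + 3)).
Definition ind_y1 : nat -> term :=
  scons (fn a (var 0) (var 1)) (fun k => var (k + 3)).
Definition PA_ind (n : nat) (phi : form) : form :=
  AllN n (With01
    (Imp (And (subst_form ind_at0 phi)
              (All (Imp (subst_form ind_y phi) (subst_form ind_y1 phi))))
         (All (subst_form ind_y phi)))).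

(* P(a, m, L): induction for all formulas of the full vocabulary
   {+, ., +', .'} (every [form] is in this vocabulary). *)
Inductive Peano_ax : form -> Prop :=
| PAzero : Peano_ax PA_zero
| PAone : Peano_ax PA_one
| PAsnz : Peano_ax PA_succ_nz
| PAsinj : Peano_ax PA_succ_inj
| PAadd : Peano_ax PA_add_succ
| PAmul0 : Peano_ax PA_mul_zero
| PAmulS : Peano_ax PA_mul_succ
| PAind n phi : Peano_ax (PA_ind n phi).
End Peano.

(** * The sentence ISOM(+, ., +', .') for theta(u, v) (u = var 0, v = var 1) *)

Definition theta_at (theta : form) (s t : term) : form :=
  subst_form (scons s (scons t var)) theta.

(* ISOM theta is the conjunction of: total (forall u exists v theta(u,v)),
   functional, injective, surjective (forall v exists u theta(u,v)), and
   the homomorphism clause: theta(x,x') /\ theta(y,y') ->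
   theta(x+y, x'+'y') /\ theta(x.y, x'.'y')  (x=var 3, y=var 2, x'=var 1,
   y'=var 0 under four quantifiers). *)
Definition ISOM (theta : form) : form :=
  let T := theta_at theta in
  And 
    (All (Ex (T (var 1) (var 0))))
  (And 
    (All (All (All (Imp (And (T (var 2) (var 1)) (T (var 2) (var 0)))
                        (Eq (var 1) (var 0))))))
  (And 
    (All (All (All (Imp (And (T (var 2) (var 0)) (T (var 1) (var 0)))
                        (Eq (var 2) (var 1))))))
  (And 
    (All (Ex (T (var 0) (var 1))))
    
    (All (All (All (All
      (Imp (And (T (var 3) (var 1)) (T (var 2) (var 0)))
           (And (T (fn Add (var 3) (var 2)) (fn Add' (var 1) (var 0)))
                (T (fn Mul (var 3) (var 2)) (fn Mul' (var 1) (var 0)))))))))))).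

(* Main.v *)
Require Import Defs.
From Stdlib Require Import List Lia Arith FunctionalExtensionality PropExtensionality Classical ClassicalEpsilon ProofIrrelevance Cantor Ring.
Import ListNotations.


Definition comp (s t : nat -> term) : nat -> term := fun k => subst_term t (s k).

Lemma subst_term_comp s t u : subst_term t (subst_term s u) = subst_term (comp s t) u.
Proof. induction u; cbn; [reflexivity|congruence]. Qed.

Lemma subst_term_ext s t u : (forall k, s k = t k) -> subst_term s u = subst_term t u.
Proof. intros H; induction u; cbn; [apply H|congruence]. Qed.

Lemma subst_term_id u : subst_term var u = u.
Proof. induction u; cbn; [reflexivity|congruence]. Qed.

Lemma up_comp s t : forall k, subst_term (up t) (up s k) = up (comp s t) k.
Proof.
  intros [|k]; cbn; [reflexivity|].
  unfold comp. rewrite !subst_term_comp. apply subst_term_ext. intros j. reflexivity.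
Qed.

Lemma subst_form_ext p : forall s t, (forall k, s k = t k) -> subst_form s p = subst_form t p.
Proof.
  induction p; intros s1 s2 H; cbn.
  - f_equal; apply subst_term_ext; auto.
  - reflexivity.
  - f_equal; auto.
  - f_equal. apply IHp. intros [|k]; cbn; [reflexivity|]. now rewrite H.
Qed.

Lemma subst_form_comp p : forall s t, subst_form t (subst_form s p) = subst_form (comp s t) p.
Proof.
  induction p; intros s1 s2; cbn.
  - f_equal; apply subst_term_comp.
  - reflexivity.
  - f_equal; auto.
  - f_equal. rewrite IHp. apply subst_form_ext. apply up_comp.
Qed.

Lemma subst_form_id p : subst_form var p = p.
Proof.
  enough (forall s, (forall k, s k = var k) -> subst_form s p = p) by (apply H; reflexivity).
  induction p; intros s H; cbn.
  - f_equal; rewrite (subst_term_ext _ var); try apply subst_term_id; auto.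
  - reflexivity.
  - f_equal; auto.
  - f_equal. apply IHp. intros [|k]; cbn; [reflexivity|]. now rewrite H.
Qed.

Lemma up_shift s q : subst_form (up s) (subst_form shift q) = subst_form shift (subst_form s q).
Proof.
  rewrite !subst_form_comp. apply subst_form_ext. intros k. reflexivity.
Qed.

Lemma inst_subst s t p :
  subst_form s (inst t p) = inst (subst_term s t) (subst_form (up s) p).
Proof.
  unfold inst. rewrite !subst_form_comp. apply subst_form_ext.
  intros [|k]; unfold comp; cbn; [reflexivity|].
  rewrite subst_term_comp. rewrite (subst_term_ext _ var). now rewrite subst_term_id.
  intros j; reflexivity.
Qed.

Lemma inst_shift t q : inst t (subst_form shift q) = q.
Proof.
  unfold inst. rewrite subst_form_comp. rewrite (subst_form_ext _ _ var). apply subst_form_id.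
  intros k; reflexivity.
Qed.

Lemma bounded_term_mono n m t : bounded_term n t -> n <= m -> bounded_term m t.
Proof. induction t; cbn; intuition lia. Qed.

Lemma bounded_form_mono p : forall n m, bounded_form n p -> n <= m -> bounded_form m p.
Proof.
  induction p; cbn; intros n m H Hle; intuition eauto using bounded_term_mono.
  eapply IHp; eauto; lia.
Qed.

Lemma bounded_term_ext n t s1 s2 : bounded_term n t -> (forall k, k < n -> s1 k = s2 k) ->
  subst_term s1 t = subst_term s2 t.
Proof. induction t; cbn; intuition; f_equal; auto. Qed.

Lemma bounded_form_ext p : forall n s1 s2, bounded_form n p -> (forall k, k < n -> s1 k = s2 k) ->
  subst_form s1 p = subst_form s2 p.
Proof.
  induction p; cbn; intros n s1 s2 Hb H.
  - f_equal; eapply bounded_term_ext; intuition eauto.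
  - reflexivity.
  - f_equal; intuition eauto.
  - f_equal. eapply IHp; eauto. intros [|k] Hk; cbn; [reflexivity|]. rewrite H; auto; lia.
Qed.

Lemma bounded_term_subst n m t s : bounded_term n t -> (forall k, k < n -> bounded_term m (s k)) ->
  bounded_term m (subst_term s t).
Proof. induction t; cbn; intuition. Qed.

Lemma bounded_term_shift m t : bounded_term m t -> bounded_term (S m) (subst_term shift t).
Proof. intros H. eapply bounded_term_subst; eauto. intros k Hk; cbn; lia. Qed.

Lemma bounded_form_subst p : forall n m s, bounded_form n p -> (forall k, k < n -> bounded_term m (s k)) ->
  bounded_form m (subst_form s p).
Proof.
  induction p; cbn; intros n m s Hb H.
  - intuition eauto using bounded_term_subst.
  - auto.
  - intuition eauto.
  - eapply IHp; eauto. intros [|k] Hk; cbn; [lia|]. apply bounded_term_shift. apply H. lia.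
Qed.

Fixpoint bndt (t : term) : nat := match t with var n => S n | fn _ a b => max (bndt a) (bndt b) end.
Fixpoint bnd (p : form) : nat :=
  match p with Eq a b => max (bndt a) (bndt b) | Bot => 0 | Imp p q => max (bnd p) (bnd q)
  | All p => pred (bnd p) end.

Lemma bndt_ok t : bounded_term (bndt t) t.
Proof. induction t; cbn; [lia|]. split; eapply bounded_term_mono; eauto; lia. Qed.

Lemma bnd_ok p : bounded_form (bnd p) p.
Proof.
  induction p; cbn.
  - split; eapply bounded_term_mono; eauto using bndt_ok; lia.
  - auto.
  - split; eapply bounded_form_mono; eauto; lia.
  - eapply bounded_form_mono; eauto; lia.
Qed.

Fixpoint bndtb (n : nat) (t : term) : bool :=
  match t with var k => Nat.ltb k n | fn _ a b => andb (bndtb n a) (bndtb n b) end.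
Fixpoint bndb (n : nat) (p : form) : bool :=
  match p with Eq a b => andb (bndtb n a) (bndtb n b) | Bot => true
  | Imp p q => andb (bndb n p) (bndb n q) | All p => bndb (S n) p end.
Lemma bndtb_ok n t : bndtb n t = true -> bounded_term n t.
Proof. induction t; cbn; [apply Nat.ltb_lt|]. rewrite Bool.andb_true_iff; intuition. Qed.
Lemma bndb_ok p : forall n, bndb n p = true -> bounded_form n p.
Proof.
  induction p; cbn; intros n; rewrite ?Bool.andb_true_iff; intuition eauto using bndtb_ok.
Qed.


Lemma nd_weak A p : nd A p -> forall B, incl A B -> nd B p.
Proof.
  induction 1; intros B HB.
  - apply ndCtx; auto.
  - apply ndII. apply IHnd. apply incl_cons; [left; auto| intros x Hx; right; auto].
  - eapply ndIE; eauto.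
  - apply ndAllI. apply IHnd. apply incl_map; auto.
  - apply ndAllE; auto.
  - apply ndExp; auto.
  - apply ndPeirce.
  - apply ndRefl.
  - eapply ndLeib; eauto.
Qed.

Lemma nd_subst A p : nd A p -> forall sg, nd (map (subst_form sg) A) (subst_form sg p).
Proof.
  induction 1; intros sg; cbn.
  - apply ndCtx. apply in_map; auto.
  - apply ndII. apply (IHnd sg).
  - eapply ndIE; [apply (IHnd1 sg)| apply (IHnd2 sg)].
  - apply ndAllI. specialize (IHnd (up sg)). rewrite map_map in IHnd.
    rewrite map_map. erewrite map_ext; [exact IHnd|]. intros q; cbn. now rewrite up_shift.
  - rewrite inst_subst. apply ndAllE. apply (IHnd sg).
  - apply ndExp. apply (IHnd sg).
  - apply ndPeirce.
  - apply ndRefl.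
  - rewrite inst_subst. eapply ndLeib. apply (IHnd1 sg). rewrite <- inst_subst. apply (IHnd2 sg).
Qed.

Lemma nd_gen A p x N : (forall q, In q A -> bounded_form N q) -> bounded_form N (All p) -> N <= x ->
  nd A (inst (var x) p) -> nd A (All p).
Proof.
  intros HA Hp Hx H.
  set (s := fun k => if Nat.eqb k x then var 0 else var (S k)).
  pose proof (nd_subst _ _ H s) as H0; clear H; rename H0 into H.
  apply ndAllI.
  replace (map (subst_form shift) A) with (map (subst_form s) A).
  2:{ apply map_ext_in. intros q Hq. eapply bounded_form_ext. apply HA; auto.
      intros k Hk. unfold s. destruct (Nat.eqb_spec k x); [lia|reflexivity]. }
  enough (Heq : subst_form s (inst (var x) p) = p) by (rewrite Heq in H; exact H).
  unfold inst. rewrite subst_form_comp. rewrite <- (subst_form_id p) at 2.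
  eapply bounded_form_ext. exact Hp. intros [|k] Hk; unfold comp; cbn.
  - unfold s. now rewrite Nat.eqb_refl.
  - unfold s. destruct (Nat.eqb_spec k x); [lia|reflexivity].
Qed.

Lemma nd_in A p : In p A -> nd A p. Proof. apply ndCtx. Qed.
Lemma nd_hd A p : nd (p :: A) p. Proof. apply ndCtx; left; auto. Qed.
Lemma nd_lift A p q : nd A p -> nd (q :: A) p.
Proof. intros H; eapply nd_weak; eauto. intros x; right; auto. Qed.

Lemma nd_dne A p : nd A (Neg (Neg p)) -> nd A p.
Proof.
  intros H. eapply ndIE. apply (ndPeirce A p Bot).
  apply ndII. apply ndExp. eapply ndIE. apply nd_lift, H. apply nd_hd.
Qed.

Lemma nd_negimp1 A p q : nd A (Neg (Imp p q)) -> nd A p.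
Proof.
  intros H. apply nd_dne. apply ndII. eapply ndIE. apply nd_lift, H.
  apply ndII. apply ndExp. eapply ndIE. apply nd_lift, nd_hd. apply nd_hd.
Qed.

Lemma nd_negimp2 A p q : nd A (Neg (Imp p q)) -> nd A (Neg q).
Proof.
  intros H. apply ndII. eapply ndIE. apply nd_lift, H. apply ndII. apply nd_lift, nd_hd.
Qed.

Definition prv (T : form -> Prop) p := provable T p.

Lemma prv_mp T p q : provable T (Imp p q) -> provable T p -> provable T q.
Proof.
  intros [A [HA H1]] [B [HB H2]]. exists (A ++ B). split.
  - intros x Hx. apply in_app_or in Hx; intuition.
  - eapply ndIE; eapply nd_weak; eauto; intros x Hx; apply in_or_app; auto.
Qed.

Lemma prv_ax T p : T p -> provable T p.
Proof. intros H. exists [p]. split; [intros q [->|[]]; auto| apply nd_hd]. Qed.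

Lemma prv_nd T p q : provable T p -> nd [p] q -> provable T q.
Proof.
  intros [A [HA H]] H2. exists A. split; auto.
  eapply ndIE; [|exact H]. apply ndII. eapply nd_weak; eauto. intros x [<-|[]]; left; auto.
Qed.

Definition addT (T : form -> Prop) p := fun q => T q \/ q = p.

Lemma split_list (T : form -> Prop) p A : (forall q, In q A -> addT T p q) ->
  exists A', (forall q, In q A' -> T q) /\ incl A (p :: A').
Proof.
  induction A as [|a A IH]; intros H.
  - exists []. split; [intros q []| intros x []].
  - destruct IH as [A' [H1 H2]]. { intros q Hq; apply H; right; auto. }
    destruct (H a (or_introl eq_refl)) as [Ha| ->].
    + exists (a :: A'). split. intros q [<-|Hq]; auto.
      intros x [<-|Hx]. right; left; auto. apply H2 in Hx. destruct Hx as [<-|Hx]; [left; auto|right; right; auto].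
    + exists A'. split; auto. intros x [<-|Hx]; [left; auto| auto].
Qed.

Lemma prv_deduct T p q : provable (addT T p) q -> provable T (Imp p q).
Proof.
  intros [A [HA H]]. destruct (split_list T p A HA) as [A' [H1 H2]].
  exists A'. split; auto. apply ndII. eapply nd_weak; eauto.
Qed.

Lemma prv_weak (T T' : form -> Prop) p : (forall q, T q -> T' q) -> provable T p -> provable T' p.
Proof. intros H [A [HA HB]]. exists A; split; auto. Qed.

Definition consistent T := ~ provable T Bot.


(** * Part 3: Tarski semantics *)
Section Sem.
Variable D : Type.
Variable I : fsym -> D -> D -> D.

Fixpoint eval (r : nat -> D) (t : term) : D :=
  match t with var n => r n | fn f a b => I f (eval r a) (eval r b) end.

Definition dcons (d : D) (r : nat -> D) (n : nat) : D := match n with 0 => d | S k => r k end.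

Fixpoint sat (r : nat -> D) (p : form) : Prop :=
  match p with
  | Eq a b => eval r a = eval r b
  | Bot => False
  | Imp p q => sat r p -> sat r q
  | All p => forall d, sat (dcons d r) p
  end.

Lemma eval_subst r s t : eval r (subst_term s t) = eval (fun k => eval r (s k)) t.
Proof. induction t; cbn; congruence. Qed.

Lemma sat_subst p : forall r s, sat r (subst_form s p) <-> sat (fun k => eval r (s k)) p.
Proof.
  induction p; intros r s; cbn.
  - rewrite !eval_subst. tauto.
  - tauto.
  - rewrite IHp1, IHp2. tauto.
  - split; intros H d; specialize (H d); rewrite IHp in *;
    (replace (fun k => eval (dcons d r) (up s k)) with (dcons d (fun k => eval r (s k))) in *;
     [auto| apply functional_extensionality; intros [|k]; cbn; [reflexivity|];
       rewrite eval_subst; reflexivity]).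
Qed.

Lemma eval_ext n t r1 r2 : bounded_term n t -> (forall k, k < n -> r1 k = r2 k) -> eval r1 t = eval r2 t.
Proof. induction t; cbn; intuition; f_equal; auto. Qed.

Lemma sat_ext p : forall n r1 r2, bounded_form n p -> (forall k, k < n -> r1 k = r2 k) ->
  (sat r1 p <-> sat r2 p).
Proof.
  induction p; cbn; intros n r1 r2 Hb H.
  - destruct Hb; rewrite (eval_ext n t r1 r2), (eval_ext n t0 r1 r2); auto; tauto.
  - tauto.
  - destruct Hb. rewrite (IHp1 n r1 r2), (IHp2 n r1 r2); auto. tauto.
  - split; intros H1 d; [rewrite <- (IHp (S n) (dcons d r1))|rewrite (IHp (S n) (dcons d r1))]; auto;
    intros [|k] Hk; cbn; auto; apply H; lia.
Qed.

Lemma sat_Neg r p : sat r (Neg p) <-> ~ sat r p. Proof. cbn. tauto. Qed.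
Lemma sat_And r p q : sat r (And p q) <-> sat r p /\ sat r q. Proof. cbn. tauto. Qed.
Lemma sat_Ex r p : sat r (Ex p) <-> exists d, sat (dcons d r) p.
Proof.
  cbn. split.
  - intros H. apply NNPP. intros H1. apply H. intros d Hd. apply H1. eauto.
  - intros [d Hd] H. eapply H; eauto.
Qed.

Inductive F2 : Type :=
| fAtom : form -> F2
| fEq : term -> term -> F2
| fImp : F2 -> F2 -> F2
| fAnd : F2 -> F2 -> F2
| fOr : F2 -> F2 -> F2
| fNot : F2 -> F2
| fAll : F2 -> F2
| fEx : F2 -> F2.

Fixpoint tr (p : F2) : form :=
  match p with
  | fAtom q => q
  | fEq a b => Eq a b
  | fImp p q => Imp (tr p) (tr q)
  | fAnd p q => And (tr p) (tr q)
  | fOr p q => Imp (Neg (tr p)) (tr q)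
  | fNot p => Neg (tr p)
  | fAll p => All (tr p)
  | fEx p => Ex (tr p)
  end.

Fixpoint sem (r : nat -> D) (p : F2) : Prop :=
  match p with
  | fAtom q => sat r q
  | fEq a b => eval r a = eval r b
  | fImp p q => sem r p -> sem r q
  | fAnd p q => sem r p /\ sem r q
  | fOr p q => sem r p \/ sem r q
  | fNot p => ~ sem r p
  | fAll p => forall d, sem (dcons d r) p
  | fEx p => exists d, sem (dcons d r) p
  end.

Lemma tr_sem p : forall r, sat r (tr p) <-> sem r p.
Proof.
  induction p; intros r; cbn [tr sem].
  - tauto.
  - cbn; tauto.
  - cbn. rewrite IHp1, IHp2. tauto.
  - rewrite sat_And, IHp1, IHp2. tauto.
  - cbn. rewrite IHp1, IHp2. tauto.
  - rewrite sat_Neg, IHp. tauto.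
  - cbn. split; intros H d; apply IHp; auto.
  - rewrite sat_Ex. split; intros [d Hd]; exists d; apply IHp; auto.
Qed.

End Sem.

Arguments eval {D} I r t.
Arguments sat {D} I r p.
Arguments sem {D} I r p.
Arguments dcons {D} d r n.


(** * Part 4: completeness *)

Definition fidx (f : fsym) : nat := match f with Defs.Add => 0 | Defs.Mul => 1 | Defs.Add' => 2 | Defs.Mul' => 3 end.
Lemma fidx_inj f g : fidx f = fidx g -> f = g. Proof. destruct f, g; cbn; congruence. Qed.

Lemma to_nat_inj a b : Cantor.to_nat a = Cantor.to_nat b -> a = b.
Proof. intros H. rewrite <- (Cantor.cancel_of_to a), <- (Cantor.cancel_of_to b). congruence. Qed.

Fixpoint enct (t : term) : nat :=
  match t with var n => Cantor.to_nat (0, n) | fn f a b => Cantor.to_nat (S (fidx f), Cantor.to_nat (enct a, enct b)) end.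
Fixpoint encf (p : form) : nat :=
  match p with
  | Eq a b => Cantor.to_nat (0, Cantor.to_nat (enct a, enct b))
  | Bot => Cantor.to_nat (1, 0)
  | Imp p q => Cantor.to_nat (2, Cantor.to_nat (encf p, encf q))
  | All p => Cantor.to_nat (3, encf p)
  end.

Opaque Cantor.to_nat.
Lemma enct_inj t : forall u, enct t = enct u -> t = u.
Proof.
  induction t; intros [m|g u1 u2]; cbn [enct encf]; intros H; apply to_nat_inj in H; try congruence.
  injection H as H1 H2. apply to_nat_inj in H2. injection H2 as H2 H3.
  apply fidx_inj in H1. f_equal; auto.
Qed.

Lemma encf_inj p : forall q, encf p = encf q -> p = q.
Proof.
  induction p; intros [a b| |q1 q2|q]; cbn [enct encf]; intros H; apply to_nat_inj in H; try congruence.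
  - injection H as H. apply to_nat_inj in H. injection H as H1 H2.
    f_equal; apply enct_inj; auto.
  - injection H as H. apply to_nat_inj in H. injection H as H1 H2. f_equal; auto.
  - injection H as H. f_equal; auto.
Qed.

Definition enum (n : nat) : form :=
  match excluded_middle_informative (exists p, encf p = n) with
  | left H => proj1_sig (constructive_indefinite_description _ H)
  | right _ => Bot
  end.

Lemma enum_enc p : enum (encf p) = p.
Proof.
  unfold enum. destruct excluded_middle_informative as [H|H].
  - destruct constructive_indefinite_description as [q Hq]. cbn. apply encf_inj; auto.
  - exfalso; eauto.
Qed.

Section Completeness.
Variable T : form -> Prop.
Variable phi : form.
Hypothesis phi_closed : bounded_form 0 phi.
Hypothesis not_prv : ~ provable T phi.

Definition T0 : form -> Prop := fun p => (T p /\ bounded_form 0 p) \/ p = Neg phi.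

Lemma T0_closed p : T0 p -> bounded_form 0 p.
Proof. intros [[_ H]| ->]; cbn; auto. Qed.

Lemma cons_T0 : consistent T0.
Proof.
  intros H. apply not_prv.
  assert (H1 : provable (addT (fun p => T p /\ bounded_form 0 p) (Neg phi)) Bot).
  { eapply prv_weak; [|exact H]. intros q [Hq|Hq]; [left|right]; auto. }
  apply prv_deduct in H1.
  eapply prv_weak with (T := fun p => T p /\ bounded_form 0 p). { intros q [Hq _]; auto. }
  eapply prv_nd; [exact H1|]. apply nd_dne. apply nd_hd.
Qed.

Fixpoint w (n : nat) : nat := match n with 0 => bnd (enum 0) | S k => S (w k) + bnd (enum (S k)) end.
Lemma w_ge n : bnd (enum n) <= w n. Proof. destruct n; cbn; lia. Qed.
Lemma w_mono k n : k < n -> w k < w n.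
Proof. induction n; intros H; [lia|]. cbn. destruct (Nat.eq_dec k n); subst; [lia|]. specialize (IHn ltac:(lia)); lia. Qed.

Definition Hk (n : nat) : form := Imp (inst (var (w n)) (enum n)) (All (enum n)).

Lemma Hk_bnd n : bounded_form (S (w n)) (Hk n).
Proof.
  cbn. split.
  - eapply bounded_form_subst. apply bnd_ok. intros [|k] Hk; cbn; pose proof (w_ge n); lia.
  - eapply bounded_form_mono. apply bnd_ok. pose proof (w_ge n); lia.
Qed.

Definition TH (N : nat) : form -> Prop := fun p => T0 p \/ exists k, k < N /\ p = Hk k.

Lemma cons_TH N : consistent (TH N).
Proof.
  induction N.
  - intros H. apply cons_T0. eapply prv_weak; [|exact H]. intros q [Hq|[k [Hk _]]]; [auto|lia].
  - intros H. apply IHN.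
    assert (H1 : provable (addT (TH N) (Hk N)) Bot).
    { eapply prv_weak; [|exact H]. intros q [Hq|[k [Hk ->]]]; [left; left; auto|].
      destruct (Nat.eq_dec k N); [subst; right; auto| left; right; exists k; split; auto; lia]. }
    apply prv_deduct in H1. destruct H1 as [A [HA H1]].
    exists A. split; auto.
    pose proof (nd_negimp1 _ _ _ H1) as H2. pose proof (nd_negimp2 _ _ _ H1) as H3.
    eapply ndIE; [exact H3|].
    eapply (nd_gen _ _ (w N) (w N)); [| |lia|exact H2].
    + intros q Hq. destruct (HA q Hq) as [Hq'|[k [Hk ->]]].
      * eapply bounded_form_mono. apply T0_closed; auto. lia.
      * eapply bounded_form_mono. apply Hk_bnd. pose proof (w_mono k N Hk); lia.
    + cbn. eapply bounded_form_mono. apply bnd_ok. pose proof (w_ge N); lia.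
Qed.

Definition T1 : form -> Prop := fun p => T0 p \/ exists k, p = Hk k.

Lemma cons_T1 : consistent T1.
Proof.
  intros [A [HA H]].
  assert (exists N, forall q, In q A -> TH N q) as [N HN].
  { clear H. induction A as [|a A IH].
    - exists 0. intros q [].
    - destruct IH as [N HN]. { intros q Hq; apply HA; right; auto. }
      destruct (HA a (or_introl eq_refl)) as [Ha|[k ->]].
      + exists N. intros q [<-|Hq]; auto. left; auto.
      + exists (S (max N k)). intros q [<-|Hq]. right; exists k; split; auto; lia.
        destruct (HN q Hq) as [H1|[j [Hj ->]]]; [left; auto| right; exists j; split; auto; lia]. }
  apply (cons_TH N). exists A; split; auto.
Qed.

Fixpoint G (n : nat) : form -> Prop :=
  match n with
  | 0 => T1
  | S k => if excluded_middle_informative (consistent (addT (G k) (enum k)))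
           then addT (G k) (enum k) else addT (G k) (Neg (enum k))
  end.

Lemma G_step n p : G n p -> G (S n) p.
Proof. intros H. cbn. destruct excluded_middle_informative; left; auto. Qed.

Lemma G_mono k n p : k <= n -> G k p -> G n p.
Proof. induction 1; auto using G_step. Qed.

Lemma cons_G n : consistent (G n).
Proof.
  induction n; [apply cons_T1|]. cbn. destruct excluded_middle_informative as [H|H]; auto.
  intros H1. apply IHn. apply prv_deduct in H1.
  apply NNPP in H. apply prv_deduct in H.
  eapply prv_mp; [exact H1| exact H].
Qed.

Definition Gam : form -> Prop := fun p => exists n, G n p.

Lemma Gam_fin p : provable Gam p -> exists n, provable (G n) p.
Proof.
  intros [A [HA H]].
  assert (exists n, forall q, In q A -> G n q) as [n Hn].
  { clear H. induction A as [|a A IH].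
    - exists 0. intros q [].
    - destruct IH as [N HN]. { intros q Hq; apply HA; right; auto. }
      destruct (HA a (or_introl eq_refl)) as [k Hk].
      exists (max N k). intros q [<-|Hq]. eapply (G_mono k); eauto; lia. eapply (G_mono N); eauto; lia. }
  exists n. exists A. auto.
Qed.

Lemma cons_Gam : consistent Gam.
Proof. intros H. apply Gam_fin in H as [n Hn]. eapply cons_G; eauto. Qed.

Lemma Gam_complete p : provable Gam p \/ provable Gam (Neg p).
Proof.
  set (n := encf p).
  assert (G (S n) p \/ G (S n) (Neg p)) as [H|H].
  { cbn. destruct excluded_middle_informative; [left|right]; right; unfold n; rewrite enum_enc; reflexivity. }
  - left. apply prv_ax. exists (S n); auto.
  - right. apply prv_ax. exists (S n); auto.
Qed.

Lemma T1_Gam p : T1 p -> Gam p. Proof. intros H; exists 0; auto. Qed.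

Definition Pq (s t : term) : Prop := provable Gam (Eq s t).

Lemma inst_shift_t t u : subst_term (scons t var) (subst_term shift u) = u.
Proof. rewrite subst_term_comp. rewrite (subst_term_ext _ var); [apply subst_term_id| intros; reflexivity]. Qed.

Lemma prv_leib s t p : provable Gam (Eq s t) -> provable Gam (inst s p) -> provable Gam (inst t p).
Proof.
  intros [A [HA H1]] [B [HB H2]]. exists (A ++ B). split.
  - intros x Hx. apply in_app_or in Hx; intuition.
  - eapply ndLeib; eapply nd_weak; eauto; intros x Hx; apply in_or_app; auto.
Qed.

Lemma Pq_refl t : Pq t t.
Proof. exists []. split; [intros q []|apply ndRefl]. Qed.

Lemma Pq_sym s t : Pq s t -> Pq t s.
Proof.
  intros H. unfold Pq.
  pose proof (prv_leib s t (Eq (var 0) (subst_term shift s)) H) as H1.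
  unfold inst in H1; cbn in H1. rewrite !inst_shift_t in H1. apply H1, Pq_refl.
Qed.

Lemma Pq_trans r s t : Pq r s -> Pq s t -> Pq r t.
Proof.
  intros H1 H2. unfold Pq.
  pose proof (prv_leib s t (Eq (subst_term shift r) (var 0)) H2) as H.
  unfold inst in H; cbn in H. rewrite !inst_shift_t in H. apply H, H1.
Qed.

Lemma Pq_cong f s1 s2 t1 t2 : Pq s1 s2 -> Pq t1 t2 -> Pq (fn f s1 t1) (fn f s2 t2).
Proof.
  intros H1 H2.
  pose proof (prv_leib s1 s2 (Eq (fn f (subst_term shift s1) (subst_term shift t1)) (fn f (var 0) (subst_term shift t1))) H1) as H.
  unfold inst in H; cbn in H. rewrite !inst_shift_t in H. specialize (H (Pq_refl _)).
  pose proof (prv_leib t1 t2 (Eq (fn f (subst_term shift s1) (subst_term shift t1)) (fn f (subst_term shift s2) (var 0))) H2) as H'.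
  unfold inst in H'; cbn in H'. rewrite !inst_shift_t in H'. apply H', H.
Qed.

Definition Dq : Type := {P : term -> Prop | exists t, P = fun s => Pq t s}.
Definition cls (t : term) : Dq := exist _ (fun s => Pq t s) (ex_intro _ t eq_refl).
Definition rep (d : Dq) : term := proj1_sig (constructive_indefinite_description _ (proj2_sig d)).

Lemma cls_rep d : cls (rep d) = d.
Proof.
  destruct d as [P HP]. unfold rep, cls. cbn.
  destruct constructive_indefinite_description as [t Ht]. cbn. subst P.
  f_equal. apply proof_irrelevance.
Qed.

Lemma cls_eq s t : cls s = cls t <-> Pq s t.
Proof.
  split.
  - intros H. apply (f_equal (@proj1_sig _ _)) in H. cbn in H.
    apply (f_equal (fun P => P t)) in H. cbn in H. rewrite H. apply Pq_refl.
  - intros H. unfold cls.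
    assert (E : (fun u => Pq s u) = (fun u => Pq t u)).
    { apply functional_extensionality; intros u. apply propositional_extensionality.
      split; intros H1; eauto using Pq_trans, Pq_sym. }
    revert E. generalize (ex_intro (fun t0 => (fun u => Pq s u) = (fun s0 => Pq t0 s0)) s eq_refl).
    generalize (ex_intro (fun t0 => (fun u => Pq t u) = (fun s0 => Pq t0 s0)) t eq_refl).
    intros e1 e2 E. revert e2. rewrite E. intros e2. f_equal. apply proof_irrelevance.
Qed.

Definition Iq (f : fsym) (d1 d2 : Dq) : Dq := cls (fn f (rep d1) (rep d2)).

Lemma rep_cls t : Pq (rep (cls t)) t.
Proof. apply cls_eq. apply cls_rep. Qed.

Lemma eval_cls s t : eval Iq (fun k => cls (s k)) t = cls (subst_term s t).
Proof.
  induction t; cbn; [reflexivity|]. rewrite IHt1, IHt2. unfold Iq. apply cls_eq.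
  apply Pq_cong; apply rep_cls.
Qed.

Lemma truth p : forall s, sat Iq (fun k => cls (s k)) p <-> provable Gam (subst_form s p).
Proof.
  induction p; intros s; cbn.
  - rewrite !eval_cls. apply cls_eq.
  - split; [tauto|]. apply cons_Gam.
  - rewrite IHp1, IHp2. split.
    + intros H. destruct (Gam_complete (subst_form s p1)) as [H1|H1].
      * specialize (H H1). destruct H as [A [HA H]]. exists A; split; auto. apply ndII. apply nd_lift; auto.
      * destruct H1 as [A [HA H1]]. exists A; split; auto. apply ndII. apply ndExp.
        eapply ndIE. apply nd_lift; eauto. apply nd_hd.
    + intros H1 H2. eapply prv_mp; eauto.
  - split.
    + intros H. set (q := subst_form (up s) p).
      set (n := encf q).
      assert (HH : provable Gam (Hk n)). { apply prv_ax. apply T1_Gam. right. exists n. reflexivity. }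
      unfold Hk in HH. unfold n in HH. rewrite enum_enc in HH.
      eapply prv_mp; [exact HH|].
      specialize (H (cls (var (w n)))).
      replace (dcons (cls (var (w n))) (fun k => cls (s k))) with (fun k => cls (scons (var (w n)) s k)) in H.
      2:{ apply functional_extensionality; intros [|k]; reflexivity. }
      rewrite IHp in H. unfold q. unfold inst. rewrite subst_form_comp.
      erewrite subst_form_ext; [exact H|]. intros [|k]; unfold comp; cbn; [reflexivity|].
      rewrite inst_shift_t. reflexivity.
    + intros H d. rewrite <- (cls_rep d).
      replace (dcons (cls (rep d)) (fun k => cls (s k))) with (fun k => cls (scons (rep d) s k)).
      2:{ apply functional_extensionality; intros [|k]; reflexivity. }
      rewrite IHp. destruct H as [A [HA H]]. exists A; split; auto.
      apply ndAllE with (t := rep d) in H. unfold inst in H. rewrite subst_form_comp in H.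
      erewrite subst_form_ext; [exact H|]. intros [|k]; unfold comp; cbn; [reflexivity|].
      rewrite inst_shift_t. reflexivity.
Qed.

Lemma model_false : (forall psi, T psi -> bounded_form 0 psi -> forall r, sat Iq r psi) -> ~ (forall r, sat Iq r phi).
Proof.
  intros _ Hphi.
  assert (H : sat Iq (fun k => cls (var k)) (Neg phi)).
  { apply truth. rewrite subst_form_id. apply prv_ax. apply T1_Gam. left. right. reflexivity. }
  apply H, Hphi.
Qed.

Lemma model_T psi : T psi -> bounded_form 0 psi -> forall r, sat Iq r psi.
Proof.
  intros H1 H2 r. apply (sat_ext _ _ psi 0 (fun k => cls (var k))); [auto| intros; lia|].
  apply truth. rewrite subst_form_id. apply prv_ax. apply T1_Gam. left. left. auto.
Qed.

End Completeness.

Theorem completeness (T : form -> Prop) (phi : form) : bounded_form 0 phi ->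
  (forall (D : Type) (I : fsym -> D -> D -> D),
     (forall psi, T psi -> bounded_form 0 psi -> forall r, sat I r psi) -> forall r, sat I r phi) ->
  provable T phi.
Proof.
  intros Hc H. apply NNPP. intros Hn.
  apply (model_false T phi Hc Hn (model_T T phi Hc Hn)).
  apply H. apply (model_T T phi Hc Hn).
Qed.


Definition tm := nat -> term.
Definition fm := nat -> F2.
Definition Lv (l : nat) : tm := fun d => var (d - S l).
Definition Fv (j : nat) : tm := fun d => var (d + j).
Definition Op (f : fsym) (s t : tm) : tm := fun d => fn f (s d) (t d).
Definition EQ (s t : tm) : fm := fun d => fEq (s d) (t d).
Definition IMP (p q : fm) : fm := fun d => fImp (p d) (q d).
Definition AND (p q : fm) : fm := fun d => fAnd (p d) (q d).
Definition OR (p q : fm) : fm := fun d => fOr (p d) (q d).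
Definition NOT (p : fm) : fm := fun d => fNot (p d).
Definition ALL (k : nat -> fm) : fm := fun d => fAll (k d (S d)).
Definition EX (k : nat -> fm) : fm := fun d => fEx (k d (S d)).

Lemma sat_AllN {D} (I : fsym -> D -> D -> D) n : forall r X, sat I r (AllN n X) ->
  forall r2, sat I (fun k => if k <? n then r2 k else r (k - n)) X.
Proof.
  induction n; intros r X H r2; cbn [AllN] in *.
  - match goal with |- sat I ?f X => replace f with r; auto end.
    apply functional_extensionality; intros k. destruct (Nat.ltb_spec k 0); [lia|]. f_equal; lia.
  - specialize (IHn _ _ (H (r2 n)) r2).
    match goal with |- sat I ?f X => replace f
      with (fun k => if k <? n then r2 k else dcons (r2 n) r (k - n)); auto end.
    apply functional_extensionality; intros k.
    destruct (Nat.ltb_spec k n), (Nat.ltb_spec k (S n)); try lia; auto.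
    + assert (k = n) by lia. subst. rewrite Nat.sub_diag. reflexivity.
    + destruct (k - n) eqn:E; [lia|]. cbn. f_equal. lia.
Qed.

Lemma bnd_AllN n : forall k X, bounded_form (k + n) X -> bounded_form k (AllN n X).
Proof.
  induction n; intros k X H; cbn.
  - rewrite Nat.add_0_r in H; auto.
  - apply IHn. replace (S k + n) with (k + S n) by lia. auto.
Qed.

Section Pair.
Variable D : Type.
Variable I : fsym -> D -> D -> D.
Variables A M : fsym.
Hypothesis HP : forall psi, Peano_ax A M psi -> bounded_form 0 psi -> forall r, sat I r psi.

Notation "x +_ y" := (I A x y) (at level 50, left associativity).
Notation "x *_ y" := (I M x y) (at level 40, left associativity).

Variable d0 : D.
Definition r0 : nat -> D := fun _ => d0.

Ltac closed := apply bndb_ok; reflexivity.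

Lemma ex_zero : exists z, forall x, x +_ z = x /\ z +_ x = x.
Proof.
  assert (H := HP _ (PAzero A M) ltac:(closed) r0).
  apply sat_Ex in H as [z Hz]. exists z. intros x. specialize (Hz x). apply sat_And in Hz. exact Hz.
Qed.

Lemma ex_one : exists e, forall x, x *_ e = x /\ e *_ x = x.
Proof.
  assert (H := HP _ (PAone A M) ltac:(closed) r0).
  apply sat_Ex in H as [z Hz]. exists z. intros x. specialize (Hz x). apply sat_And in Hz. exact Hz.
Qed.

Variables z e : D.
Hypothesis Hz : forall x, x +_ z = x /\ z +_ x = x.
Hypothesis He : forall x, x *_ e = x /\ e *_ x = x.

Lemma with01 r body : sat I r (With01 A M body) -> sat I (dcons e (dcons z r)) body.
Proof.
  intros H. apply (H z e).
  - intros x. apply sat_And. apply Hz.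
  - intros x. apply sat_And. apply He.
Qed.

Lemma add0 x : x +_ z = x. Proof. apply Hz. Qed.
Lemma add0l x : z +_ x = x. Proof. apply Hz. Qed.
Lemma mul1 x : x *_ e = x. Proof. apply He. Qed.
Lemma mul1l x : e *_ x = x. Proof. apply He. Qed.

Lemma succ_nz x : x +_ e <> z.
Proof. exact (with01 _ _ (HP _ (PAsnz A M) ltac:(closed) r0) x). Qed.

Lemma succ_inj x y : x +_ e = y +_ e -> x = y.
Proof. exact (with01 _ _ (HP _ (PAsinj A M) ltac:(closed) r0) x y). Qed.

Lemma add_succ x y : x +_ (y +_ e) = (x +_ y) +_ e.
Proof. exact (with01 _ _ (HP _ (PAadd A M) ltac:(closed) r0) x y). Qed.

Lemma mul0 x : x *_ z = z.
Proof. exact (with01 _ _ (HP _ (PAmul0 A M) ltac:(closed) r0) x). Qed.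

Lemma mul_succ x y : x *_ (y +_ e) = (x *_ y) +_ x.
Proof. exact (with01 _ _ (HP _ (PAmulS A M) ltac:(closed) r0) x y). Qed.

Lemma ind_sem n phi r (Q : D -> Prop) : bounded_form (S n) phi ->
  (forall y, sat I (dcons y r) phi <-> Q y) -> Q z -> (forall y, Q y -> Q (y +_ e)) -> forall y, Q y.
Proof.
  intros Hb HQ H0 HS.
  assert (Hc : bounded_form 0 (PA_ind A M n phi)).
  { unfold PA_ind. apply bnd_AllN. cbn -[subst_form]. repeat split; try lia.
    - eapply bounded_form_subst; eauto. intros [|k] Hk; cbn; lia.
    - eapply bounded_form_subst; eauto. intros [|k] Hk; cbn; lia.
    - eapply bounded_form_subst; eauto. intros [|k] Hk; cbn; lia.
    - eapply bounded_form_subst; eauto. intros [|k] Hk; cbn; lia. }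
  assert (H := HP _ (PAind A M n phi) Hc r0).
  apply (sat_AllN I n) with (r2 := r) in H.
  apply with01 in H.
  set (r' := fun k : nat => if k <? n then r k else r0 (k - n)) in H.
  assert (Hr : forall y, sat I (dcons y r') phi <-> sat I (dcons y r) phi).
  { intros y. apply (sat_ext _ _ phi (S n)); auto. intros [|k] Hk; cbn; auto. unfold r'.
    destruct (Nat.ltb_spec k n); [reflexivity|lia]. }
  cbn [sat] in H. rewrite sat_And in H.
  assert (E0 : (fun k => eval I (dcons e (dcons z r')) (ind_at0 k)) = dcons z r').
  { apply functional_extensionality; intros [|k]; cbn; [reflexivity|]. rewrite Nat.add_comm; reflexivity. }
  assert (E1 : forall y, (fun k => eval I (dcons y (dcons e (dcons z r'))) (ind_y k)) = dcons y r').
  { intros y; apply functional_extensionality; intros [|k]; cbn; [reflexivity|]. rewrite Nat.add_comm; reflexivity. }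
  assert (E2 : forall y, (fun k => eval I (dcons y (dcons e (dcons z r'))) (ind_y1 A k)) = dcons (y +_ e) r').
  { intros y; apply functional_extensionality; intros [|k]; cbn; [reflexivity|]. rewrite Nat.add_comm; reflexivity. }
  intros y. apply HQ, Hr.
  assert (B0 : sat I (dcons e (dcons z r')) (subst_form ind_at0 phi)).
  { rewrite sat_subst, E0. apply Hr, HQ, H0. }
  assert (B1 : sat I (dcons e (dcons z r')) (All (Imp (subst_form ind_y phi) (subst_form (ind_y1 A) phi)))).
  { intros d. cbn [sat]. rewrite !sat_subst, E1, E2. rewrite !Hr, !HQ. apply HS. }
  assert (H' := H (conj B0 B1) y). rewrite sat_subst, E1 in H'; exact H'.
Qed.

Lemma ind2 n (phi : fm) r (Q : D -> Prop) : bndb (S n) (tr (phi 0)) = true ->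
  (forall y, sem I (dcons y r) (phi 0) <-> Q y) -> Q z -> (forall y, Q y -> Q (y +_ e)) -> forall y, Q y.
Proof.
  intros Hb HQ. apply (ind_sem n (tr (phi 0)) r); [apply bndb_ok; auto|].
  intros y. rewrite tr_sem. apply HQ.
Qed.

Definition env (l : list D) : nat -> D := fun k => nth k l d0.

Ltac ind n phi ps := refine (ind2 n phi (env ps) _ _ _ _ _); [reflexivity | let y := fresh in intros y; reflexivity | | ].

Notation "s ⊕ t" := (Op A s t) (at level 50, left associativity).
Notation "s ⊗ t" := (Op M s t) (at level 40, left associativity).

Lemma addA x y c : x +_ y +_ c = x +_ (y +_ c).
Proof.
  revert c. ind 2 (EQ (Fv 1 ⊕ Fv 2 ⊕ Fv 0) (Fv 1 ⊕ (Fv 2 ⊕ Fv 0))) [x; y].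
  - rewrite !add0; auto.
  - intros c IH. rewrite !add_succ, IH. reflexivity.
Qed.

Lemma add1C x : e +_ x = x +_ e.
Proof.
  revert x. ind 1 (EQ (Fv 1 ⊕ Fv 0) (Fv 0 ⊕ Fv 1)) [e].
  - rewrite add0, add0l; auto.
  - intros x IH. rewrite add_succ, IH. reflexivity.
Qed.

Lemma addC x y : x +_ y = y +_ x.
Proof.
  revert y. ind 1 (EQ (Fv 1 ⊕ Fv 0) (Fv 0 ⊕ Fv 1)) [x].
  - rewrite add0, add0l; auto.
  - intros y IH. rewrite add_succ, IH, <- add_succ, <- add1C, addA. reflexivity.
Qed.

Lemma mulDl x y c : x *_ (y +_ c) = x *_ y +_ x *_ c.
Proof.
  revert c. ind 2 (EQ (Fv 1 ⊗ (Fv 2 ⊕ Fv 0)) (Fv 1 ⊗ Fv 2 ⊕ Fv 1 ⊗ Fv 0)) [x; y].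
  - rewrite add0, mul0, add0. reflexivity.
  - intros c IH. rewrite add_succ, !mul_succ, IH, addA. reflexivity.
Qed.

Lemma mul0l x : z *_ x = z.
Proof.
  revert x. ind 1 (EQ (Fv 1 ⊗ Fv 0) (Fv 1)) [z].
  - apply mul0.
  - intros x IH. rewrite mul_succ, IH, add0. reflexivity.
Qed.

Lemma mulSl x y : (x +_ e) *_ y = x *_ y +_ y.
Proof.
  revert y. ind 2 (EQ ((Fv 1 ⊕ Fv 2) ⊗ Fv 0) (Fv 1 ⊗ Fv 0 ⊕ Fv 0)) [x; e].
  - rewrite !mul0, add0. reflexivity.
  - intros y IH. rewrite !mul_succ, IH, !addA. f_equal.
    rewrite <- !addA. rewrite (addC y x). reflexivity.
Qed.

Lemma mulC x y : x *_ y = y *_ x.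
Proof.
  revert y. ind 1 (EQ (Fv 1 ⊗ Fv 0) (Fv 0 ⊗ Fv 1)) [x].
  - rewrite mul0, mul0l. reflexivity.
  - intros y IH. rewrite mul_succ, mulSl, IH. reflexivity.
Qed.

Lemma mulA x y c : x *_ y *_ c = x *_ (y *_ c).
Proof.
  revert c. ind 2 (EQ (Fv 1 ⊗ Fv 2 ⊗ Fv 0) (Fv 1 ⊗ (Fv 2 ⊗ Fv 0))) [x; y].
  - rewrite !mul0. reflexivity.
  - intros c IH. rewrite !mul_succ, IH, mulDl. reflexivity.
Qed.

Lemma srth : semi_ring_theory z e (I A) (I M) (@eq D).
Proof.
  constructor.
  - apply add0l.
  - apply addC.
  - intros; symmetry; apply addA.
  - apply mul1l.
  - apply mul0l.
  - apply mulC.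
  - intros; symmetry; apply mulA.
  - intros x y c. rewrite mulC, mulDl, !(mulC c). reflexivity.
Qed.


Add Ring SR : srth.

Definition le x y := exists k, x +_ k = y.

Lemma pred y : y = z \/ exists p, y = p +_ e.
Proof.
  revert y. ind 2 (OR (EQ (Fv 0) (Fv 1)) (EX (fun p => EQ (Fv 0) (Lv p ⊕ Fv 2)))) [z; e].
  - left; auto.
  - intros y _. right. exists y. reflexivity.
Qed.

Lemma cancel c x y : x +_ c = y +_ c -> x = y.
Proof.
  revert c x y.
  ind 0 (ALL (fun x => ALL (fun y => IMP (EQ (Lv x ⊕ Fv 0) (Lv y ⊕ Fv 0)) (EQ (Lv x) (Lv y))))) (@nil D).
  - intros x y. rewrite !add0. auto.
  - intros c IH x y H. rewrite !add_succ in H. apply succ_inj in H. auto.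
Qed.

Lemma cancel_l c x y : c +_ x = c +_ y -> x = y.
Proof. rewrite (addC c x), (addC c y). apply cancel. Qed.

Lemma add_eq0 x y : x +_ y = z -> x = z /\ y = z.
Proof.
  intros H. destruct (pred y) as [->|[p ->]].
  - rewrite add0 in H. auto.
  - rewrite add_succ in H. exfalso; eapply succ_nz; eauto.
Qed.

Lemma le_refl x : le x x. Proof. exists z. apply add0. Qed.
Lemma le_trans x y w : le x y -> le y w -> le x w.
Proof. intros [k <-] [l <-]. exists (k +_ l). ring. Qed.
Lemma le_0 x : le z x. Proof. exists x. apply add0l. Qed.
Lemma le_add x k : le x (x +_ k). Proof. exists k; reflexivity. Qed.
Lemma le_S x y : le x y -> le x (y +_ e). Proof. intros [k <-]. exists (k +_ e). ring. Qed.

Lemma le_total x y : le x y \/ le y x.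
Proof.
  revert y.
  ind 1 (OR (EX (fun k => EQ (Fv 1 ⊕ Lv k) (Fv 0))) (EX (fun k => EQ (Fv 0 ⊕ Lv k) (Fv 1)))) [x].
  - right. apply le_0.
  - intros y [[k Hk]|[k Hk]].
    + left. exists (k +_ e). rewrite <- Hk. ring.
    + destruct (pred k) as [->|[p ->]].
      * left. exists e. rewrite <- Hk. ring.
      * right. exists p. rewrite <- Hk. ring.
Qed.

Lemma le_cases x y : le x y -> x = y \/ le (x +_ e) y.
Proof.
  intros [k <-]. destruct (pred k) as [->|[p ->]].
  - left. ring.
  - right. exists p. ring.
Qed.

Lemma lt_irrefl x : ~ le (x +_ e) x.
Proof.
  intros [k Hk]. assert (H : (e +_ k) +_ x = z +_ x).
  { transitivity (x +_ e +_ k); [ring|]. rewrite Hk. ring. }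
  apply cancel in H. rewrite addC in H. eapply succ_nz; eauto.
Qed.

Lemma le_antisym x y : le x y -> le y x -> x = y.
Proof.
  intros [k Hk] [l Hl]. assert (H : x +_ (k +_ l) = x +_ z).
  { transitivity (x +_ k +_ l); [ring|]. rewrite Hk, Hl. ring. }
  apply cancel_l, add_eq0 in H as [-> _]. rewrite <- Hk; ring.
Qed.

Lemma le_SS x y : le (x +_ e) (y +_ e) -> le x y.
Proof. intros [k Hk]. exists k. apply (cancel e). rewrite <- Hk. ring. Qed.

Lemma le_mulr x y c : le x y -> le (x *_ c) (y *_ c).
Proof. intros [k <-]. exists (k *_ c). ring. Qed.

Lemma le_zero x : le x z -> x = z.
Proof. intros [k Hk]. apply add_eq0 in Hk. tauto. Qed.

Lemma le_S_cases x y : le x (y +_ e) -> le x y \/ x = y +_ e.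
Proof.
  intros H. destruct (le_cases _ _ H) as [->|H1]; [right; auto| left; apply le_SS; auto].
Qed.

Lemma lt_le x y : le (x +_ e) y -> le x y.
Proof. intros H. eapply le_trans; [|exact H]. apply le_add. Qed.

Lemma lt_not_le x y : le (x +_ e) y -> le y x -> False.
Proof. intros H1 H2. apply (lt_irrefl x). eapply le_trans; eauto. Qed.

Lemma div_ex Mv c : exists q w, c = q *_ (e +_ Mv) +_ w /\ le w Mv.
Proof.
  revert c.
  ind 2 (EX (fun q => EX (fun w => AND (EQ (Fv 0) (Lv q ⊗ (Fv 2 ⊕ Fv 1) ⊕ Lv w))
                                        (EX (fun k => EQ (Lv w ⊕ Lv k) (Fv 1)))))) [Mv; e].
  - exists z, z. split; [ring| apply le_0].
  - intros c [q [w [-> Hw]]]. destruct (le_cases _ _ Hw) as [->|Hw'].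
    + exists (q +_ e), z. split; [ring| apply le_0].
    + exists q, (w +_ e). split; [ring| auto].
Qed.

Lemma div_uniq Mv q w q' w' : q *_ (e +_ Mv) +_ w = q' *_ (e +_ Mv) +_ w' -> le w Mv -> le w' Mv -> w = w'.
Proof.
  revert q w q' w'.
  assert (Hgen : forall q w q' w', q *_ (e +_ Mv) +_ w = q' *_ (e +_ Mv) +_ w' -> le w Mv -> le w' Mv -> le q q' -> w = w').
  { intros q w q' w' H Hw Hw' [k <-].
    assert (H1 : q *_ (e +_ Mv) +_ w = q *_ (e +_ Mv) +_ (k *_ (e +_ Mv) +_ w')) by (rewrite H; ring).
    apply cancel_l in H1. destruct (pred k) as [->|[p ->]].
    - rewrite H1. ring.
    - exfalso. apply (lt_not_le Mv w); auto. exists (p *_ (e +_ Mv) +_ w'). rewrite H1. ring. }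
  intros q w q' w' H Hw Hw'. destruct (le_total q q'); [eauto|]. symmetry. eauto.
Qed.

End Pair.


(** * Part 6: the formula theta and its semantics *)
Notation "s ⊕ t" := (Op Defs.Add s t) (at level 50, left associativity).
Notation "s ⊗ t" := (Op Defs.Mul s t) (at level 40, left associativity).
Notation "s ⊞ t" := (Op Defs.Add' s t) (at level 50, left associativity).
Notation "s ⊠ t" := (Op Defs.Mul' s t) (at level 40, left associativity).

Definition leF (x y : tm) : fm := EX (fun k => EQ (x ⊕ Lv k) y).
Definition betaF (E c d i w : tm) : fm :=
  EX (fun q => AND (EQ c (Lv q ⊗ (E ⊕ (i ⊕ E) ⊗ d) ⊕ w)) (leF w ((i ⊕ E) ⊗ d))).
Definition goodF (Z E Z' E' c d u : tm) : fm :=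
  AND (betaF E c d Z Z')
      (ALL (fun i => ALL (fun w => IMP (leF (Lv i ⊕ E) u)
        (IMP (betaF E c d (Lv i) (Lv w)) (betaF E c d (Lv i ⊕ E) (Lv w ⊞ E')))))).
Definition thetaP (Z E Z' E' u v : tm) : fm :=
  EX (fun c => EX (fun d => AND (goodF Z E Z' E' (Lv c) (Lv d) u) (betaF E (Lv c) (Lv d) u v))).
Definition isZF (f : fsym) (Z : tm) : fm :=
  ALL (fun x => AND (EQ (Op f (Lv x) Z) (Lv x)) (EQ (Op f Z (Lv x)) (Lv x))).
Definition thetaF : fm :=
  EX (fun z => EX (fun e => EX (fun z' => EX (fun e' =>
    AND (isZF Defs.Add (Lv z)) (AND (isZF Defs.Mul (Lv e)) (AND (isZF Defs.Add' (Lv z')) (AND (isZF Defs.Mul' (Lv e'))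
      (thetaP (Lv z) (Lv e) (Lv z') (Lv e') (Fv 0) (Fv 1))))))))).
Definition theta : form := tr (thetaF 0).

Lemma theta_bounded : bounded_form 2 theta.
Proof. apply bndb_ok. reflexivity. Qed.

Section Generic.
Variable D : Type.
Variable I : fsym -> D -> D -> D.
Definition BetaG (e c d i w : D) : Prop :=
  exists q, c = I Defs.Add (I Defs.Mul q (I Defs.Add e (I Defs.Mul (I Defs.Add i e) d))) w /\ le D I Defs.Add w (I Defs.Mul (I Defs.Add i e) d).
Definition GoodG (z e z' e' c d u : D) : Prop :=
  BetaG e c d z z' /\ forall i w, le D I Defs.Add (I Defs.Add i e) u -> BetaG e c d i w -> BetaG e c d (I Defs.Add i e) (I Defs.Add' w e').
Definition ThetaG (z e z' e' u v : D) : Prop := exists c d, GoodG z e z' e' c d u /\ BetaG e c d u v.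

Lemma sem_theta r : sem I r (thetaF 0) <->
  exists z e z' e', (forall x, I Defs.Add x z = x /\ I Defs.Add z x = x) /\ (forall x, I Defs.Mul x e = x /\ I Defs.Mul e x = x) /\
    (forall x, I Defs.Add' x z' = x /\ I Defs.Add' z' x = x) /\ (forall x, I Defs.Mul' x e' = x /\ I Defs.Mul' e' x = x) /\
    ThetaG z e z' e' (r 0) (r 1).
Proof. reflexivity. Qed.
End Generic.


Definition mmF (E d i : tm) : tm := E ⊕ (i ⊕ E) ⊗ d.
Definition copF (E x y : tm) : fm := EX (fun s => EX (fun t => EQ (Lv s ⊗ x) (Lv t ⊗ y ⊕ E))).

Section Mixed.
Variable D : Type.
Variable I : fsym -> D -> D -> D.
Hypothesis HT : forall psi, (Peano_ax Defs.Add Defs.Mul psi \/ Peano_ax Defs.Add' Defs.Mul' psi) ->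
  bounded_form 0 psi -> forall r, sat I r psi.
Variable d0 : D.

Lemma HP1 : forall psi, Peano_ax Defs.Add Defs.Mul psi -> bounded_form 0 psi -> forall r, sat I r psi.
Proof. intros; apply HT; auto. Qed.
Lemma HP2 : forall psi, Peano_ax Defs.Add' Defs.Mul' psi -> bounded_form 0 psi -> forall r, sat I r psi.
Proof. intros; apply HT; auto. Qed.

Variables z e z' e' : D.
Hypothesis Hz : forall x, I Defs.Add x z = x /\ I Defs.Add z x = x.
Hypothesis He : forall x, I Defs.Mul x e = x /\ I Defs.Mul e x = x.
Hypothesis Hz' : forall x, I Defs.Add' x z' = x /\ I Defs.Add' z' x = x.
Hypothesis He' : forall x, I Defs.Mul' x e' = x /\ I Defs.Mul' e' x = x.

Local Notation "x +_ y" := (I Defs.Add x y) (at level 50, left associativity).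
Local Notation "x *_ y" := (I Defs.Mul x y) (at level 40, left associativity).
Local Notation "x |+ y" := (I Defs.Add' x y) (at level 50, left associativity).
Local Notation "x |* y" := (I Defs.Mul' x y) (at level 40, left associativity).
Local Notation le1 := (le D I Defs.Add).
Local Notation Beta := (BetaG D I e).
Local Notation Good := (GoodG D I z e z' e').
Local Notation Theta := (ThetaG D I z e z' e').

Add Ring R1 : (srth D I Defs.Add Defs.Mul HP1 d0 z e Hz He).

Ltac indA n phi ps := refine (ind2 D I Defs.Add Defs.Mul HP1 d0 z e Hz He n phi (env D d0 ps) _ _ _ _ _);
  [reflexivity | let y := fresh in intros y; reflexivity | | ].
Ltac indB n phi ps := refine (ind2 D I Defs.Add' Defs.Mul' HP2 d0 z' e' Hz' He' n phi (env D d0 ps) _ _ _ _ _);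
  [reflexivity | let y := fresh in intros y; reflexivity | | ].

Lemma pred1 y : y = z \/ exists p, y = p +_ e. Proof. exact (pred _ _ _ _ HP1 d0 z e Hz He y). Qed.
Lemma pred2 y : y = z' \/ exists p, y = p |+ e'. Proof. exact (pred _ _ _ _ HP2 d0 z' e' Hz' He' y). Qed.
Lemma nz1 x : x +_ e <> z. Proof. exact (succ_nz _ _ _ _ HP1 d0 z e Hz He x). Qed.
Lemma nz2 x : x |+ e' <> z'. Proof. exact (succ_nz _ _ _ _ HP2 d0 z' e' Hz' He' x). Qed.
Lemma inj2 x y : x |+ e' = y |+ e' -> x = y. Proof. exact (succ_inj _ _ _ _ HP2 d0 z' e' Hz' He' x y). Qed.
Lemma adds2 x y : x |+ (y |+ e') = (x |+ y) |+ e'. Proof. exact (add_succ _ _ _ _ HP2 d0 z' e' Hz' He' x y). Qed.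
Lemma muls2 x y : x |* (y |+ e') = (x |* y) |+ x. Proof. exact (mul_succ _ _ _ _ HP2 d0 z' e' Hz' He' x y). Qed.
Lemma mul02 x : x |* z' = z'. Proof. exact (mul0 _ _ _ _ HP2 d0 z' e' Hz' He' x). Qed.
Lemma add02 x : x |+ z' = x. Proof. apply Hz'. Qed.
Lemma cancel1 c x y : x +_ c = y +_ c -> x = y. Proof. exact (cancel _ _ _ _ HP1 d0 z e Hz He c x y). Qed.
Lemma le_zero1 x : le1 x z -> x = z. Proof. exact (le_zero _ _ _ _ HP1 d0 z e Hz He x). Qed.
Lemma le_cases1 x y : le1 x y -> x = y \/ le1 (x +_ e) y. Proof. exact (le_cases _ _ _ _ HP1 d0 z e Hz He x y). Qed.
Lemma le_S_cases1 x y : le1 x (y +_ e) -> le1 x y \/ x = y +_ e. Proof. exact (le_S_cases _ _ _ _ HP1 d0 z e Hz He x y). Qed.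
Lemma le_SS1 x y : le1 (x +_ e) (y +_ e) -> le1 x y. Proof. exact (le_SS _ _ _ _ HP1 d0 z e Hz He x y). Qed.

Lemma le_refl1 x : le1 x x. Proof. exists z. apply Hz. Qed.
Lemma le_trans1 x y w : le1 x y -> le1 y w -> le1 x w.
Proof. intros [k <-] [l <-]. exists (k +_ l). ring. Qed.
Lemma le_add1 x k : le1 x (x +_ k). Proof. exists k; reflexivity. Qed.
Lemma le_S1 x y : le1 x y -> le1 x (y +_ e). Proof. intros [k <-]. exists (k +_ e). ring. Qed.
Lemma le_mull1 x y c : le1 x y -> le1 (c *_ x) (c *_ y). Proof. intros [k <-]. exists (c *_ k). ring. Qed.
Lemma le_mul_e x y : le1 y ((x +_ e) *_ y). Proof. exists (x *_ y). ring. Qed.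
Lemma lt_le1 x y : le1 (x +_ e) y -> le1 x y. Proof. intros H. eapply le_trans1; [|exact H]. apply le_add1. Qed.

Lemma beta_ex c d i : exists w, Beta c d i w.
Proof.
  destruct (div_ex _ _ _ _ HP1 d0 z e Hz He ((i +_ e) *_ d) c) as [q [w [H1 H2]]].
  exists w, q. auto.
Qed.

Lemma beta_un c d i w w' : Beta c d i w -> Beta c d i w' -> w = w'.
Proof.
  intros [q [H1 H2]] [q' [H1' H2']].
  eapply (div_uniq _ _ _ _ HP1 d0 z e Hz He ((i +_ e) *_ d) q w q' w'); auto. congruence.
Qed.

Lemma beta_fit c d d' i w : le1 d d' -> Beta c d i w -> le1 w ((i +_ e) *_ d').
Proof. intros H [q [_ H2]]. eapply le_trans1; [exact H2|]. apply le_mull1; auto. Qed.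

Definition mm (d' i : D) := e +_ (i +_ e) *_ d'.
Definition Coprime (x y : D) := exists s t, s *_ x = t *_ y +_ e.

Lemma cop_mul x1 x2 y : Coprime x1 y -> Coprime x2 y -> Coprime (x1 *_ x2) y.
Proof.
  intros [s1 [t1 H1]] [s2 [t2 H2]]. exists (s1 *_ s2), (t1 *_ t2 *_ y +_ t1 +_ t2).
  transitivity ((s1 *_ x1) *_ (s2 *_ x2)); [ring|]. rewrite H1, H2. ring.
Qed.

Lemma cop_mod d' u i k : (forall r, le1 r u -> exists g, d' = (r +_ e) *_ g) ->
  le1 (i +_ e) k -> le1 k (u +_ e) -> Coprime (mm d' i) (mm d' k).
Proof.
  intros Hd [r0 Hk] [l Hl]. subst k.
  assert (Hr : le1 r0 u).
  { exists (i +_ l). apply (cancel1 e). rewrite <- Hl. ring. }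
  destruct (Hd r0 Hr) as [g Hg].
  unfold Coprime, mm.
  set (p := i +_ e). set (r := r0 +_ e).
  exists (e +_ p *_ (p +_ r) *_ (p +_ r) *_ g *_ d'), (p *_ g *_ r +_ p *_ p *_ (p +_ r) *_ g *_ d').
  replace (i +_ e +_ r0 +_ e) with (p +_ r) by (unfold p, r; ring).
  rewrite Hg. unfold r. ring.
Qed.

Lemma crt L X c2 w : Coprime L (e +_ X) -> exists K q, c2 +_ L *_ K = q *_ (e +_ X) +_ w.
Proof.
  intros [s [t H]]. exists (s *_ (w +_ c2 *_ X)), (c2 +_ t *_ (w +_ c2 *_ X)).
  transitivity (c2 +_ (s *_ L) *_ (w +_ c2 *_ X)); [ring|]. rewrite H. ring.
Qed.

Lemma pres c2 d' i w L K : Beta c2 d' i w -> (exists l, L = mm d' i *_ l) -> Beta (c2 +_ L *_ K) d' i w.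
Proof.
  intros [q [H1 H2]] [l ->]. exists (q +_ l *_ K). split; auto. rewrite H1. unfold mm. ring.
Qed.

Lemma crt_beta c2 L d' i w : Coprime L (mm d' i) -> le1 w ((i +_ e) *_ d') ->
  exists K, Beta (c2 +_ L *_ K) d' i w.
Proof.
  intros Hc Hw. destruct (crt L ((i +_ e) *_ d') c2 w Hc) as [K [q H]].
  exists K, q. split; auto.
Qed.

Lemma dvd_ex B n : exists d', le1 B d' /\ forall r, le1 r n -> exists g, d' = (r +_ e) *_ g.
Proof.
  revert n.
  indA 2 (EX (fun d' => AND (leF (Fv 1) (Lv d'))
            (ALL (fun r => IMP (leF (Lv r) (Fv 0)) (EX (fun g => EQ (Lv d') ((Lv r ⊕ Fv 2) ⊗ Lv g))))))) [B; e].
  - exists B. split; [apply le_refl1|]. intros r Hr. apply le_zero1 in Hr. subst r. exists B. ring.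
  - intros n [d' [H1 H2]]. exists (d' *_ (n +_ e +_ e)). split.
    + eapply le_trans1; [exact H1|]. exists (d' *_ (n +_ e)). ring.
    + intros r Hr. destruct (le_S_cases1 _ _ Hr) as [Hr' | ->].
      * destruct (H2 r Hr') as [g ->]. exists (g *_ (n +_ e +_ e)). ring.
      * exists d'. ring.
Qed.

Lemma reenc c d d' u : le1 d d' -> (forall r, le1 r u -> exists g, d' = (r +_ e) *_ g) ->
  forall j, le1 j u -> exists c2 L, (forall i w, le1 i j -> Beta c d i w -> Beta c2 d' i w) /\
    (forall i, le1 i j -> exists l, L = mm d' i *_ l) /\
    (forall k, le1 (j +_ e) k -> le1 k (u +_ e) -> Coprime L (mm d' k)).
Proof.
  intros Hdd Hdiv.
  indA 5 (IMP (leF (Fv 0) (Fv 4)) (EX (fun c2 => EX (fun L => AND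
   (ALL (fun i => ALL (fun w => IMP (leF (Lv i) (Fv 0)) (IMP (betaF (Fv 5) (Fv 1) (Fv 2) (Lv i) (Lv w)) (betaF (Fv 5) (Lv c2) (Fv 3) (Lv i) (Lv w))))))
   (AND (ALL (fun i => IMP (leF (Lv i) (Fv 0)) (EX (fun l => EQ (Lv L) (mmF (Fv 5) (Fv 3) (Lv i) ⊗ Lv l)))))
        (ALL (fun k => IMP (leF (Fv 0 ⊕ Fv 5) (Lv k)) (IMP (leF (Lv k) (Fv 4 ⊕ Fv 5)) (copF (Fv 5) (Lv L) (mmF (Fv 5) (Fv 3) (Lv k))))))))))) [c; d; d'; u; e].
  - intros _. destruct (beta_ex c d z) as [w0 Hw0]. exists w0, (mm d' z). split; [|split].
    + intros i w Hi Hw. apply le_zero1 in Hi. subst i. rewrite (beta_un _ _ _ _ _ Hw Hw0).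
      exists z. split; [ring|]. eapply beta_fit; eauto.
    + intros i Hi. apply le_zero1 in Hi. subst i. exists e. ring.
    + intros k Hk1 Hk2. apply (cop_mod d' u); auto.
  - intros j IH Hj. destruct IH as [c2 [L [H1 [H2 H3]]]]. { apply lt_le1; auto. }
    destruct (beta_ex c d (j +_ e)) as [w1 Hw1].
    destruct (crt_beta c2 L d' (j +_ e) w1) as [K HK].
    { apply H3; [apply le_refl1| apply le_S1; auto]. }
    { eapply beta_fit; eauto. }
    exists (c2 +_ L *_ K), (L *_ mm d' (j +_ e)). split; [|split].
    + intros i w Hi Hw. destruct (le_S_cases1 _ _ Hi) as [Hi' | ->].
      * apply pres; auto.
      * rewrite (beta_un _ _ _ _ _ Hw Hw1). auto.
    + intros i Hi. destruct (le_S_cases1 _ _ Hi) as [Hi' | ->].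
      * destruct (H2 i Hi') as [l ->]. exists (l *_ mm d' (j +_ e)). ring.
      * exists L. ring.
    + intros k Hk1 Hk2. apply cop_mul.
      * apply H3; auto. apply lt_le1; auto.
      * apply (cop_mod d' u); auto.
Qed.


Lemma Th0 : Theta z z'.
Proof.
  assert (Hb : Beta z' z' z z').
  { exists z. split; [ring|]. exists z. ring. }
  exists z', z'. split; [split|]; auto.
  intros i w Hi _. apply le_zero1 in Hi. exfalso; eapply nz1; eauto.
Qed.

Lemma Th1 u v : Theta u v -> Theta (u +_ e) (v |+ e').
Proof.
  intros [c [d [[Hg0 Hgs] Hv]]].
  set (W := v |+ e').
  destruct (dvd_ex (d +_ W) u) as [d' [HB Hdiv]].
  assert (Hdd : le1 d d') by (eapply le_trans1; [apply le_add1| exact HB]).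
  assert (HW : le1 W d') by (eapply le_trans1; [|exact HB]; exists d; ring).
  destruct (reenc c d d' u Hdd Hdiv u (le_refl1 u)) as [c2 [L [H1 [H2 H3]]]].
  destruct (crt_beta c2 L d' (u +_ e) W) as [K HK].
  { apply H3; apply le_refl1. }
  { eapply le_trans1; [exact HW| apply le_mul_e]. }
  assert (Hz0 : le1 z u) by (exists u; ring).
  exists (c2 +_ L *_ K), d'. split; [split|exact HK].
  - apply pres; [apply H1; auto| apply H2; auto].
  - intros i w Hi Hw. assert (Hiu : le1 i u) by (apply le_SS1; auto).
    destruct (beta_ex c d i) as [wi Hwi].
    assert (Hwi' : Beta (c2 +_ L *_ K) d' i wi) by (apply pres; [apply H1; auto| apply H2; auto]).
    rewrite (beta_un _ _ _ _ _ Hw Hwi'). destruct (le_cases1 i u Hiu) as [-> | Hlt].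
    + rewrite (beta_un _ _ _ _ _ Hwi Hv). exact HK.
    + apply pres; [apply H1; auto| apply H2; auto].
Qed.

Lemma B0 v : Theta z v -> v = z'.
Proof. intros [c [d [[H0 _] Hv]]]. eapply beta_un; eauto. Qed.

Lemma B1 u y : Theta (u +_ e) y -> exists b, Theta u b /\ y = b |+ e'.
Proof.
  intros [c [d [[H0 Hs] Hy]]]. destruct (beta_ex c d u) as [b Hb]. exists b. split.
  - exists c, d. split; [split|]; auto. intros i w Hi Hw. apply Hs; auto. apply le_S1; auto.
  - eapply beta_un; [exact Hy|]. apply Hs; auto. apply le_refl1.
Qed.

Lemma C0 x : Theta x z' -> x = z.
Proof.
  intros H. destruct (pred1 x) as [->|[p ->]]; auto.
  apply B1 in H as [b [_ Hb]]. exfalso; eapply nz2; eauto.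
Qed.

Definition thP (u v : tm) : fm := thetaP (Fv 1) (Fv 2) (Fv 3) (Fv 4) u v.

Lemma func u : forall v v', Theta u v -> Theta u v' -> v = v'.
Proof.
  revert u.
  indA 4 (ALL (fun v => ALL (fun v' => IMP (thP (Fv 0) (Lv v)) (IMP (thP (Fv 0) (Lv v')) (EQ (Lv v) (Lv v')))))) [z; e; z'; e'].
  - intros v v' H1 H2. rewrite (B0 _ H1), (B0 _ H2). auto.
  - intros u IH v v' H1 H2. apply B1 in H1 as [b [Hb ->]]. apply B1 in H2 as [b' [Hb' ->]].
    rewrite (IH b b'); auto.
Qed.

Lemma total u : exists v, Theta u v.
Proof.
  revert u. indA 4 (EX (fun v => thP (Fv 0) (Lv v))) [z; e; z'; e'].
  - exists z'. apply Th0.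
  - intros u [v Hv]. exists (v |+ e'). apply Th1; auto.
Qed.

Lemma surj v : exists u, Theta u v.
Proof.
  revert v. indB 4 (EX (fun u => thP (Lv u) (Fv 0))) [z; e; z'; e'].
  - exists z. apply Th0.
  - intros v [u Hu]. exists (u +_ e). apply Th1; auto.
Qed.

Lemma inj x : forall x' y, Theta x y -> Theta x' y -> x = x'.
Proof.
  revert x.
  indA 4 (ALL (fun x' => ALL (fun y => IMP (thP (Fv 0) (Lv y)) (IMP (thP (Lv x') (Lv y)) (EQ (Fv 0) (Lv x')))))) [z; e; z'; e'].
  - intros x' y H1 H2. rewrite (B0 _ H1) in H2. symmetry. apply C0; auto.
  - intros x IH x' y H1 H2. apply B1 in H1 as [b [Hb ->]].
    destruct (pred1 x') as [->|[p ->]].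
    + apply B0 in H2. exfalso; eapply nz2; eauto.
    + apply B1 in H2 as [b' [Hb' Hbb]]. apply inj2 in Hbb. subst b'.
      rewrite (IH p b); auto.
Qed.

Lemma hom_add y : forall x x' y', Theta x x' -> Theta y y' -> Theta (x +_ y) (x' |+ y').
Proof.
  revert y.
  indA 4 (ALL (fun x => ALL (fun x' => ALL (fun y' => IMP (thP (Lv x) (Lv x')) (IMP (thP (Fv 0) (Lv y'))
     (thP (Lv x ⊕ Fv 0) (Lv x' ⊞ Lv y'))))))) [z; e; z'; e'].
  - intros x x' y' Hx Hy. rewrite (B0 _ Hy). rewrite add02.
    replace (x +_ z) with x by ring. auto.
  - intros y IH x x' y' Hx Hy. apply B1 in Hy as [b [Hb ->]].
    specialize (IH x x' b Hx Hb). apply Th1 in IH.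
    rewrite adds2. replace (x +_ (y +_ e)) with (x +_ y +_ e) by ring. auto.
Qed.

Lemma hom_mul y : forall x x' y', Theta x x' -> Theta y y' -> Theta (x *_ y) (x' |* y').
Proof.
  revert y.
  indA 4 (ALL (fun x => ALL (fun x' => ALL (fun y' => IMP (thP (Lv x) (Lv x')) (IMP (thP (Fv 0) (Lv y'))
     (thP (Lv x ⊗ Fv 0) (Lv x' ⊠ Lv y'))))))) [z; e; z'; e'].
  - intros x x' y' Hx Hy. rewrite (B0 _ Hy). rewrite mul02.
    replace (x *_ z) with z by ring. apply Th0.
  - intros y IH x x' y' Hx Hy. apply B1 in Hy as [b [Hb ->]].
    specialize (IH x x' b Hx Hb).
    rewrite muls2. replace (x *_ (y +_ e)) with (x *_ y +_ x) by ring.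
    apply hom_add; auto.
Qed.

Lemma sat_T r s t : sat I r (theta_at theta s t) <-> Theta (eval I r s) (eval I r t).
Proof.
  unfold theta_at, theta. rewrite sat_subst, tr_sem, sem_theta. cbn [scons eval].
  split.
  - intros [z1 [e1 [z1' [e1' [H1 [H2 [H3 [H4 H5]]]]]]]].
    assert (z1 = z) as -> by (transitivity (z +_ z1); [symmetry; apply Hz| apply H1]).
    assert (e1 = e) as -> by (transitivity (e *_ e1); [symmetry; apply He| apply H2]).
    assert (z1' = z') as -> by (transitivity (z' |+ z1'); [symmetry; apply Hz'| apply H3]).
    assert (e1' = e') as -> by (transitivity (e' |* e1'); [symmetry; apply He'| apply H4]).
    exact H5.
  - intros H. exists z, e, z', e'. auto.
Qed.

Lemma isom r : sat I r (ISOM theta).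
Proof.
  unfold ISOM. cbv zeta. rewrite !sat_And. split; [|split; [|split; [|split]]].
  - intros u. apply sat_Ex. destruct (total u) as [v Hv]. exists v. apply sat_T. exact Hv.
  - intros x y1 y2 H. apply sat_And in H as [H1 H2]. rewrite sat_T in H1, H2.
    cbn [eval dcons] in *. eapply func; eauto.
  - intros x1 x2 y H. apply sat_And in H as [H1 H2]. rewrite sat_T in H1, H2.
    cbn [eval dcons] in *. eapply inj; eauto.
  - intros v. apply sat_Ex. destruct (surj v) as [u Hu]. exists u. apply sat_T. exact Hu.
  - intros x y x' y' H. apply sat_And in H as [H1 H2]. rewrite sat_T in H1, H2.
    cbn [eval dcons] in *. apply sat_And. split; apply sat_T; cbn [eval dcons].
    + apply hom_add; auto.
    + apply hom_mul; auto.
Qed.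

End Mixed.

Theorem sem_main (D : Type) (I : fsym -> D -> D -> D) :
  (forall psi, (Peano_ax Defs.Add Defs.Mul psi \/ Peano_ax Defs.Add' Defs.Mul' psi) ->
     bounded_form 0 psi -> forall r, sat I r psi) -> forall r, sat I r (ISOM theta).
Proof.
  intros HT r.
  destruct (ex_zero D I _ _ (HP1 D I HT) (r 0)) as [z Hz].
  destruct (ex_one D I _ _ (HP1 D I HT) (r 0)) as [e He].
  destruct (ex_zero D I _ _ (HP2 D I HT) (r 0)) as [z' Hz'].
  destruct (ex_one D I _ _ (HP2 D I HT) (r 0)) as [e' He'].
  eapply isom; eauto.
Qed.


Import Defs.

Theorem mainTheorem4 :
  exists theta : form,
    bounded_form 2 theta /\
    provable (fun p => Peano_ax Add Mul p \/ Peano_ax Add' Mul' p) (ISOM theta).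
Proof.
  exists theta. split; [apply theta_bounded|].
  apply completeness.
  - apply bndb_ok. vm_compute. reflexivity.
  - intros D I H. apply sem_main. exact H.
Qed.
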